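(* Let $n\ge4$ be even, let $\gamma\in\mathbb{F}_4\setminus\mathbb{F}_2$, and let $F=\mathrm{Inv}\circ(0,1,\gamma)$ on $\mathbb{F}_{2^n}$. If $c\in\mathbb{F}_{2^n}\setminus\mathbb{F}_4$, then $3\le{}_c\Delta_F\le4$. Furthermore, ${}_c\Delta_F=3$ if $\mathrm{tr}(c\gamma)=\mathrm{tr}(c\gamma^2)=\mathrm{tr}(c^{-1}\gamma)=\mathrm{tr}(c^{-1}\gamma^2)=\mathrm{tr}\left(\frac{c}{(c+\gamma)^2}\right)=\mathrm{tr}\left(\frac{c\gamma^2}{(c+\gamma)^2}\right)=\mathrm{tr}\left(\frac{c\gamma}{(c+\gamma^2)^2}\right)=\mathrm{tr}\left(\frac{c}{(c+\gamma^2)^2}\right)=1$.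
   Context: $\mathbb{F}_4$ is the subfield of order $4$ of $\mathbb{F}_{2^n}$. $\mathrm{Inv}(x)=x^{2^n-2}$ on $\mathbb{F}_{2^n}$. $(0,1,\gamma)$ is the $3$-cycle sending $0\mapsto1$, $1\mapsto\gamma$, $\gamma\mapsto0$ and fixing all other elements; thus $F(0)=1$, $F(1)=\gamma^{-1}$, $F(\gamma)=0$ and $F(x)=x^{-1}$ otherwise. $\mathrm{tr}$ is the absolute trace $\mathbb{F}_{2^n}\to\mathbb{F}_2$. For $c\in\mathbb{F}_{2^n}$, ${}_cD_aF(x)=F(x+a)+cF(x)$; ${}_c\Delta_F(a,b)$ is the number of $x\in\mathbb{F}_{2^n}$ with ${}_cD_aF(x)=b$; and ${}_c\Delta_F=\max\{{}_c\Delta_F(a,b): a,b\in\mathbb{F}_{2^n},\ a\neq 0 \text{ if } c=1\}$. *)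

(* Defs.v *)
From HB Require Import structures.
From mathcomp Require Import all_boot all_order all_algebra all_field.
Set Implicit Arguments. Unset Strict Implicit. Unset Printing Implicit Defensive.
Import GRing.Theory.
Local Open Scope ring_scope.

(* Setting: F : finFieldType with #|F| = 2^n (so F is F_{2^n}). *)

Definition Inv (F : finFieldType) (n : nat) (x : F) : F := x ^+ (2 ^ n - 2).

Definition cycle3 (F : finFieldType) (g : F) (x : F) : F :=
  if x == 0 then 1 else if x == 1 then g else if x == g then 0 else x.

Definition InvCyc (F : finFieldType) (n : nat) (g : F) (x : F) : F :=
  Inv n (cycle3 g x).

(* Absolute trace F_{2^n} -> F_2, valued in F. *)
Definition abs_tr (F : finFieldType) (n : nat) (x : F) : F :=
  \sum_(i < n) x ^+ (2 ^ i).

Definition cDeltaAB (F : finFieldType) (f : F -> F) (c a b : F) : nat :=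
  #|[set x : F | f (x + a) + c * f x == b]|.

Definition cDelta (F : finFieldType) (f : F -> F) (c : F) : nat :=
  \max_(ab : F * F | (c != 1) || (ab.1 != 0)) cDeltaAB f c ab.1 ab.2.

(* Main.v *)
From HB Require Import structures.
From mathcomp Require Import all_boot all_order all_algebra all_field.
From Stdlib Require Import Ring Field.
From mathcomp Require Import zify.
Require Import Defs.
Import GRing.Theory.
Local Open Scope ring_scope.

Section C2.
Variable F : fieldType.
Hypothesis two0 : (1 + 1 : F) = 0.

Definition add2 (x y : F) : F := x + y.
Definition mul2 (x y : F) : F := x * y.
Definition opp2 (x : F) : F := - x.
Definition sub2 (x y : F) : F := x - y.
Definition inv2 (x : F) : F := x^-1.
Definition div2 (x y : F) : F := x / y.
Definition zero2 : F := 0.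
Definition one2 : F := 1.

Lemma oppE2 (x : F) : - x = x.
Proof. have : x + x == 0 by rewrite -[x]mul1r -mulrDl two0 mul0r. by rewrite addr_eq0 => /eqP <-. Qed.

Lemma c2_ring : @ring_theory F zero2 one2 add2 mul2 sub2 opp2 eq.
Proof.
rewrite /zero2 /one2 /add2 /mul2 /sub2 /opp2.
split=> //= *; [exact: add0r|exact: addrC|exact: addrA|exact: mul1r|exact: mulrC|
  exact: mulrA|exact: mulrDl|exact: subrr].
Qed.

Definition bphi (b : bool) : F := if b then one2 else zero2.

Lemma c2_morph : @ring_morph F zero2 one2 add2 mul2 sub2 opp2 eq
  bool false true xorb andb xorb id Bool.eqb bphi.
Proof.
rewrite /zero2 /one2 /add2 /mul2 /sub2 /opp2 /bphi.
split=> //=.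
- by case; case=> /=; rewrite ?addr0 ?add0r ?two0.
- by case; case=> /=; rewrite ?subr0 ?sub0r ?oppE2 ?subrr ?oppr0 ?two0.
- by case; case=> /=; rewrite ?mulr0 ?mul0r ?mulr1.
- by case=> /=; rewrite ?oppE2 ?oppr0.
- by case; case.
Qed.

Lemma c2_field : @field_theory F zero2 one2 add2 mul2 sub2 opp2 div2 inv2 eq.
Proof.
split=> //=; first exact: c2_ring.
- by rewrite /one2 /zero2; apply/eqP; rewrite oner_eq0.
- by move=> p /eqP Hp; rewrite /mul2 /inv2 /one2 mulVf.
Qed.

Lemma addE (x y : F) : x + y = add2 x y. Proof. by []. Qed.
Lemma mulE (x y : F) : x * y = mul2 x y. Proof. by []. Qed.
Lemma oppE (x : F) : - x = opp2 x. Proof. by []. Qed.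
Lemma invE (x : F) : x^-1 = inv2 x. Proof. by []. Qed.
Lemma zeroE : (0 : F) = zero2. Proof. by []. Qed.
Lemma oneE : (1 : F) = one2. Proof. by []. Qed.

Lemma addxx (x : F) : x + x = 0.
Proof. by rewrite -[x]mul1r -mulrDl two0 mul0r. Qed.

Lemma add_eq (x y : F) : x + y = 0 -> x = y.
Proof. by move/eqP; rewrite addr_eq0 oppE2 => /eqP. Qed.

End C2.

Lemma card_le2 (T : finType) (A : {set T}) :
  (forall x y z, x \in A -> y \in A -> z \in A -> x != y -> x != z -> y != z -> False) ->
  (#|A| <= 2)%N.
Proof.
move=> H; rewrite cardE.
have Hu := enum_uniq (mem A).
have Hm : forall x, x \in enum (mem A) -> x \in A by move=> x; rewrite mem_enum.
move: Hu Hm; case: (enum (mem A)) => [|x [|y [|z s]]] //= Hu Hm.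
exfalso; move: Hu; rewrite !inE !negb_or => /and3P [/and3P[xy xz _] /andP[yz _] _].
apply: (H x y z) => //; apply: Hm; rewrite !inE eqxx ?orbT //.
Qed.

Lemma card_le1 (T : finType) (A : {set T}) :
  (forall x y, x \in A -> y \in A -> x = y) -> (#|A| <= 1)%N.
Proof.
move=> H; rewrite cardE.
have Hu := enum_uniq (mem A).
have Hm : forall x, x \in enum (mem A) -> x \in A by move=> x; rewrite mem_enum.
move: Hu Hm; case: (enum (mem A)) => [|x [|y s]] //= Hu Hm.
exfalso; move: Hu; rewrite !inE !negb_or => /andP [/andP[xy _] _].
by move/eqP: xy; apply; apply: H; apply: Hm; rewrite !inE eqxx ?orbT.
Qed.

Lemma card_ge3 (T : finType) (A : {set T}) x y z :
  x \in A -> y \in A -> z \in A -> x != y -> x != z -> y != z -> (3 <= #|A|)%N.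
Proof.
move=> hx hy hz xy xz yz; rewrite cardE.
have -> : 3%N = size [:: x; y; z] by [].
apply: uniq_leq_size; first by rewrite /= !inE !negb_or xy xz yz.
by move=> w; rewrite !inE mem_enum => /or3P [] /eqP ->.
Qed.

Ltac bcst t := match t with
  | zero2 _ => constr:(false)
  | one2 _ => constr:(true)
  | _ => constr:(NotConstant) end.

Section Main.
Variable F : finFieldType.
Variables (n : nat) (gam c : F).
Hypotheses (HF : #|F| = (2^n)%N) (n4 : (4 <= n)%N) (g4 : gam^+4 = gam)
  (g0 : gam != 0) (g1 : gam != 1) (c4 : c^+4 != c).

Lemma two0 : (1+1 : F) = 0.
Proof.
have h := expf_card (-1 : F); rewrite HF in h.
have e : (2^n = 2 * 2^n.-1)%N by case: n n4 => // k _; rewrite expnS.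
rewrite e exprM sqrrN !expr1n in h.
by apply/eqP; rewrite addr_eq0 {1}h.
Qed.

Add Field c2F : (c2_field F) (morphism (c2_morph F two0), constants [bcst]).

Ltac c2fold := rewrite ?exprS ?expr0 ?addE ?mulE ?oppE ?invE ?zeroE ?oneE;
  match goal with |- @eq _ ?a ?b => change (@eq (GRing.Field.sort F) a b) end.
Ltac c2foldH h := rewrite ?exprS ?expr0 ?addE ?mulE ?oppE ?invE ?zeroE ?oneE in h;
  match type of h with @eq _ ?a ?b => change (@eq (GRing.Field.sort F) a b) in h end.

Lemma addxxF (x : F) : x + x = 0. Proof. exact: (@addxx F two0 x). Qed.
Lemma add_eqF (x y : F) : x + y = 0 -> x = y. Proof. exact: (@add_eq F two0 x y). Qed.
Lemma addKF (x y : F) : x + y + y = x. Proof. by rewrite -addrA addxxF addr0. Qed.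

Lemma gg : gam * gam = gam + 1.
Proof.
have h : gam * (gam + 1) * (gam * gam + gam + 1) = 0.
  transitivity (gam ^+ 4 + gam); first by c2fold; ring.
  by rewrite g4 addxxF.
move/eqP: h; rewrite !mulf_eq0 (negbTE g0) /= => /orP [/eqP/add_eqF|/eqP h].
  by move/eqP: g1.
by apply: add_eqF; rewrite addrA.
Qed.

Lemma g1n0 : gam + 1 != 0.
Proof. by apply/eqP => /add_eqF; apply/eqP. Qed.

Lemma ginv : gam^-1 = gam + 1.
Proof.
apply: (mulfI g0); by rewrite mulfV // mulrDr gg mulr1 addrAC addxxF add0r.
Qed.

Lemma ginv1 : (gam + 1)^-1 = gam.
Proof. by rewrite -ginv invrK. Qed.

Lemma x4 (x : F) : x^+4 = x -> True. Proof. by []. Qed.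

Lemma c0 : c != 0.
Proof. by apply: contra c4 => /eqP ->; rewrite expr0n. Qed.
Lemma c1 : c != 1.
Proof. by apply: contra c4 => /eqP ->; rewrite expr1n. Qed.
Lemma cg : c != gam.
Proof. by apply: contra c4 => /eqP ->; rewrite g4. Qed.
Lemma cg1 : c != gam + 1.
Proof.
apply: contra c4 => /eqP ->; apply/eqP.
transitivity (gam ^+ 4 + 1); first by c2fold; ring.
by rewrite g4.
Qed.

Lemma InvE (x : F) : Inv n x = x^-1.
Proof.
rewrite /Inv; have h16 : (2^4 <= 2^n)%N by rewrite leq_exp2l.
case: (eqVneq x 0) => [->|nz].
  rewrite invr0 expr0n; case: eqP => // e; exfalso.
  move: h16; rewrite /= => h16; lia.
have e : ((2^n - 2).+2 = 2^n)%N by move: h16 => /= h16; lia.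
have h := expf_card x; rewrite HF -e !exprSr in h.
apply: (mulIf nz); rewrite mulVf //; apply: (mulIf nz).
by rewrite h mul1r.
Qed.

Definition f := InvCyc n gam.

Lemma fE (x : F) : f x = if x == 0 then 1 else if x == 1 then gam + 1
  else if x == gam then 0 else x^-1.
Proof.
rewrite /f /InvCyc /cycle3 InvE.
case: ifP => _; first by rewrite invr1.
case: ifP => _; first by rewrite ginv.
by case: ifP => _; rewrite ?invr0.
Qed.

Lemma f0 : f 0 = 1. Proof. by rewrite fE eqxx. Qed.
Lemma f1 : f 1 = gam + 1. Proof. by rewrite fE eqxx oner_eq0. Qed.
Lemma fg : f gam = 0. Proof. by rewrite fE eqxx (negbTE g0) (negbTE g1). Qed.
Lemma fgen (x : F) : x != 0 -> x != 1 -> x != gam -> f x = x^-1.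
Proof. by move=> h0 h1 hg; rewrite fE (negbTE h0) (negbTE h1) (negbTE hg). Qed.
Lemma eqaddF (x y : F) : (x == y) = (x + y == 0).
Proof. by apply/eqP/eqP => [->|/add_eqF]; rewrite ?addxxF. Qed.

Lemma g1_1 : gam + 1 != 1.
Proof. by rewrite eqaddF addKF. Qed.
Lemma g1_g : gam + 1 != gam.
Proof. by rewrite eqaddF addrAC addxxF add0r oner_eq0. Qed.

Lemma fg1 : f (gam + 1) = gam.
Proof. by rewrite fgen ?ginv1 //; [exact: g1n0|exact: g1_1|exact: g1_g]. Qed.

Lemma ggF : mul2 _ gam gam = add2 _ gam (one2 F). Proof. exact: gg. Qed.

Ltac nz := rewrite /add2 /mul2 /opp2 /inv2 /zero2 /one2 /=;
  apply/eqP; repeat (apply: mulf_neq0 || apply: expf_neq0 || apply: invr_neq0); try assumption.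

Ltac nzs := repeat match goal with |- _ /\ _ => split end;
  rewrite /add2 /mul2 /opp2 /inv2 /zero2 /one2 /bphi /=; apply/eqP;
  repeat (apply: mulf_neq0 || apply: expf_neq0 || apply: invr_neq0); try assumption.
Ltac fld := c2fold; field [ggF]; try nzs.

Lemma frob2 (x y : F) : (x + y)^+2 = x^+2 + y^+2.
Proof. by c2fold; ring. Qed.

Lemma frobn (x y : F) i : (x + y)^+(2^i) = x^+(2^i) + y^+(2^i).
Proof.
elim: i => [|i IH]; first by rewrite !expr1.
by rewrite expnS !exprM -!exprM mulnC !exprM IH frob2.
Qed.

Lemma trD (x y : F) : abs_tr n (x + y) = abs_tr n x + abs_tr n y.
Proof. by rewrite /abs_tr -big_split; apply: eq_bigr => i _; exact: frobn. Qed.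

Lemma tr_sq (x : F) : abs_tr n (x * x) = abs_tr n x.
Proof.
rewrite /abs_tr.
have hx : x ^+ (2^n) = x by rewrite -HF expf_card.
have e1 : \sum_(i < n.+1) x ^+ (2^i) = x + \sum_(i < n) x ^+ (2^i.+1).
  by rewrite big_ord_recl /= expn0 expr1.
have e2 : \sum_(i < n.+1) x ^+ (2^i) = \sum_(i < n) x ^+ (2^i) + x.
  by rewrite big_ord_recr /= hx.
have -> : \sum_(i < n) (x * x) ^+ (2 ^ i) = \sum_(i < n) x ^+ (2 ^ i.+1).
  by apply: eq_bigr => i _; rewrite -expr2 -exprM -expnS.
by apply: (addrI x); rewrite -e1 e2 addrC.
Qed.

Lemma tr_y (y : F) : abs_tr n (y * y + y) = 0.
Proof. by rewrite trD tr_sq addxxF. Qed.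

Lemma trace_contra (y T : F) : y * y + y + T = 0 -> abs_tr n T = 1 -> False.
Proof.
move/add_eqF => <-; rewrite tr_y => /eqP; rewrite eq_sym oner_eq0 //.
Qed.

Definition D (a x : F) := f (x + a) + c * f x.

Definition vv (a : F) (i : nat) : F :=
  match i with
  | 0 => a^-1 + c
  | 1 => (a + 1)^-1 + c * (gam + 1)
  | 2 => (a + gam)^-1
  | 3 => 1 + c * a^-1
  | 4 => (gam + 1) + c * (a + 1)^-1
  | _ => c * (a + gam)^-1
  end.

Definition pp (a : F) (i : nat) : F :=
  match i with
  | 0 => 0 | 1 => 1 | 2 => gam | 3 => a | 4 => a + 1 | _ => a + gam end.

Definition notF4 (a : F) := [&& a != 0, a != 1, a != gam & a != gam + 1].

Lemma shiftF (x y z : F) : (x + y == z) = (x == z + y).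
Proof. by apply/eqP/eqP => [<-|->]; rewrite ?addKF. Qed.

Definition E (a : F) : seq F := [:: 0; 1; gam; a; a + 1; a + gam].

Lemma E_pp (a x : F) : x \in E a -> exists2 i, (i < 6)%N & x = pp a i.
Proof.
rewrite /E !inE => h.
case/orP: h => [/eqP->|h]; first by exists 0%N.
case/orP: h => [/eqP->|h]; first by exists 1%N.
case/orP: h => [/eqP->|h]; first by exists 2%N.
case/orP: h => [/eqP->|h]; first by exists 3%N.
case/orP: h => [/eqP->|/eqP->]; first by exists 4%N.
by exists 5%N.
Qed.

Definition TR : Prop :=
  abs_tr n (c * gam) = 1 /\ abs_tr n (c * gam ^+ 2) = 1 /\
  abs_tr n (c^-1 * gam) = 1 /\ abs_tr n (c^-1 * gam ^+ 2) = 1 /\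
  abs_tr n (c / (c + gam) ^+ 2) = 1 /\ abs_tr n (c * gam ^+ 2 / (c + gam) ^+ 2) = 1 /\
  abs_tr n (c * gam / (c + gam ^+ 2) ^+ 2) = 1 /\ abs_tr n (c / (c + gam ^+ 2) ^+ 2) = 1.

Section A.
Variable a : F.
Hypothesis hA : notF4 a.
Let ha0 : a != 0. Proof. by case/and4P: hA. Qed.
Let ha1' : a != 1. Proof. by case/and4P: hA. Qed.
Let hag' : a != gam. Proof. by case/and4P: hA. Qed.
Let hag1' : a != gam + 1. Proof. by case/and4P: hA. Qed.
Let ha1 : a + 1 != 0. Proof. by rewrite -eqaddF. Qed.
Let hag : a + gam != 0. Proof. by rewrite -eqaddF. Qed.
Let hc0 : c != 0. Proof. exact: c0. Qed.
Let hg1 : gam + 1 != 0. Proof. exact: g1n0. Qed.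
Let hcg : c + gam != 0. Proof. by rewrite -eqaddF cg. Qed.
Let hcg2 : c + gam * gam != 0. Proof. by rewrite -eqaddF gg cg1. Qed.
Let hcg' : c + gam + 1 != 0. Proof. by rewrite -addrA -eqaddF cg1. Qed.
Let hcg1 : c * (gam + 1) + 1 != 0.
Proof.
rewrite -eqaddF; apply: contra cg => /eqP h.
have -> : c = c * (gam + 1) * gam by rewrite -mulrA -ginv mulVf ?mulr1.
by rewrite h mul1r.
Qed.

Lemma pair01 b : vv a 0 = b -> vv a 1 = b -> abs_tr n (c^-1 * gam^+2) = 1 -> False.
Proof.
move=> h0 h1; apply: (@trace_contra a).
have e : a*a + a + c^-1 * gam^+2 = (a*(a+1)/(c*gam)) * (vv a 0 + vv a 1) by rewrite /vv; fld.
by rewrite e h0 h1 addxxF mulr0.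
Qed.

Lemma pair02 b : vv a 0 = b -> vv a 2 = b -> abs_tr n (c^-1 * gam^+2) = 1 -> False.
Proof.
move=> h0 h1; apply: (@trace_contra (a*(gam+1))).
have e : (a*(gam+1))*(a*(gam+1)) + (a*(gam+1)) + c^-1 * gam^+2 = (a*(a+gam)*gam/c) * (vv a 0 + vv a 2) by rewrite /vv; fld.
by rewrite e h0 h1 addxxF mulr0.
Qed.

Lemma pair04 b : vv a 0 = b -> vv a 4 = b -> abs_tr n (c * gam) = 1 -> False.
Proof.
move=> h0 h1; apply: (@trace_contra (a*(c+gam+1)*(gam+1) + gam)).
have e : (a*(c+gam+1)*(gam+1) + gam)*(a*(c+gam+1)*(gam+1) + gam) + (a*(c+gam+1)*(gam+1) + gam) + c * gam = (a*(a+1)*(c+gam+1)*gam) * (vv a 0 + vv a 4) by rewrite /vv; fld.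
by rewrite e h0 h1 addxxF mulr0.
Qed.

Lemma pair05 b : vv a 0 = b -> vv a 5 = b -> abs_tr n (c / (c + gam) ^+ 2) = 1 -> False.
Proof.
move=> h0 h1; apply: (@trace_contra (a*c/(c*(gam+1)+1))).
have e : (a*c/(c*(gam+1)+1))*(a*c/(c*(gam+1)+1)) + (a*c/(c*(gam+1)+1)) + c / (c + gam) ^+ 2 = (a*(a+gam)*c/(c*(gam+1)+1)^+2) * (vv a 0 + vv a 5) by rewrite /vv; fld.
by rewrite e h0 h1 addxxF mulr0.
Qed.

Lemma pair12 b : vv a 1 = b -> vv a 2 = b -> abs_tr n (c^-1 * gam^+2) = 1 -> False.
Proof.
move=> h0 h1; apply: (@trace_contra ((a+1)*gam)).
have e : ((a+1)*gam)*((a+1)*gam) + ((a+1)*gam) + c^-1 * gam^+2 = ((a+1)*(a+gam)/c) * (vv a 1 + vv a 2) by rewrite /vv; fld.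
by rewrite e h0 h1 addxxF mulr0.
Qed.

Lemma pair13 b : vv a 1 = b -> vv a 3 = b -> abs_tr n (c^-1 * gam) = 1 -> False.
Proof.
move=> h0 h1; apply: (@trace_contra (a*(c*(gam+1)+1)/(c*gam) + gam)).
have e : (a*(c*(gam+1)+1)/(c*gam) + gam)*(a*(c*(gam+1)+1)/(c*gam) + gam) + (a*(c*(gam+1)+1)/(c*gam) + gam) + c^-1 * gam = (a*(a+1)*(c*(gam+1)+1)/(c*gam)^+2) * (vv a 1 + vv a 3) by rewrite /vv; fld.
by rewrite e h0 h1 addxxF mulr0.
Qed.

Lemma pair15 b : vv a 1 = b -> vv a 5 = b -> abs_tr n (c * gam ^+ 2 / (c + gam) ^+ 2) = 1 -> False.
Proof.
move=> h0 h1; apply: (@trace_contra (a*c*(gam+1)/(c*(gam+1)+1))).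
have e : (a*c*(gam+1)/(c*(gam+1)+1))*(a*c*(gam+1)/(c*(gam+1)+1)) + (a*c*(gam+1)/(c*(gam+1)+1)) + c * gam ^+ 2 / (c + gam) ^+ 2 = ((a+1)*(a+gam)*c*(gam+1)/(c*(gam+1)+1)^+2) * (vv a 1 + vv a 5) by rewrite /vv; fld.
by rewrite e h0 h1 addxxF mulr0.
Qed.

Lemma pair23 b : vv a 2 = b -> vv a 3 = b -> abs_tr n (c * gam / (c + gam ^+ 2) ^+ 2) = 1 -> False.
Proof.
move=> h0 h1; apply: (@trace_contra (a/(c+gam*gam))).
have e : (a/(c+gam*gam))*(a/(c+gam*gam)) + (a/(c+gam*gam)) + c * gam / (c + gam ^+ 2) ^+ 2 = (a*(a+gam)/(c+gam*gam)^+2) * (vv a 2 + vv a 3) by rewrite /vv; fld.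
by rewrite e h0 h1 addxxF mulr0.
Qed.

Lemma pair24 b : vv a 2 = b -> vv a 4 = b -> abs_tr n (c / (c + gam ^+ 2) ^+ 2) = 1 -> False.
Proof.
move=> h0 h1; apply: (@trace_contra ((gam+1)*a/(c+gam*gam))).
have e : ((gam+1)*a/(c+gam*gam))*((gam+1)*a/(c+gam*gam)) + ((gam+1)*a/(c+gam*gam)) + c / (c + gam ^+ 2) ^+ 2 = ((a+1)*(a+gam)*(gam+1)/(c+gam*gam)^+2) * (vv a 2 + vv a 4) by rewrite /vv; fld.
by rewrite e h0 h1 addxxF mulr0.
Qed.

Lemma pair34 b : vv a 3 = b -> vv a 4 = b -> abs_tr n (c * gam ^+ 2) = 1 -> False.
Proof.
move=> h0 h1; apply: (@trace_contra (a)).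
have e : (a)*(a) + (a) + c * gam ^+ 2 = (a*(a+1)*(gam+1)) * (vv a 3 + vv a 4) by rewrite /vv; fld.
by rewrite e h0 h1 addxxF mulr0.
Qed.

Lemma pair35 b : vv a 3 = b -> vv a 5 = b -> abs_tr n (c * gam ^+ 2) = 1 -> False.
Proof.
move=> h0 h1; apply: (@trace_contra (a*(gam+1))).
have e : (a*(gam+1))*(a*(gam+1)) + (a*(gam+1)) + c * gam ^+ 2 = (a*(a+gam)*gam) * (vv a 3 + vv a 5) by rewrite /vv; fld.
by rewrite e h0 h1 addxxF mulr0.
Qed.

Lemma pair45 b : vv a 4 = b -> vv a 5 = b -> abs_tr n (c * gam ^+ 2) = 1 -> False.
Proof.
move=> h0 h1; apply: (@trace_contra ((a+1)*gam)).
have e : ((a+1)*gam)*((a+1)*gam) + ((a+1)*gam) + c * gam ^+ 2 = ((a+1)*(a+gam)) * (vv a 4 + vv a 5) by rewrite /vv; fld.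
by rewrite e h0 h1 addxxF mulr0.
Qed.

Let h1c : 1 + c != 0. Proof. by rewrite -eqaddF eq_sym c1. Qed.
Let hag1 : a + (gam + 1) != 0. Proof. by rewrite -eqaddF. Qed.

Lemma bad03 b : vv a 0 = b -> vv a 3 = b -> False.
Proof.
move=> h0 h1.
have e : (1 + c) * (1 + a) = a * (vv a 0 + vv a 3) by rewrite /vv; fld.
move: e; rewrite h0 h1 addxxF mulr0 => /eqP; rewrite mulf_eq0 (negbTE h1c) /= addrC.
by rewrite (negbTE ha1).
Qed.

Lemma bad14 b : vv a 1 = b -> vv a 4 = b -> False.
Proof.
move=> h0 h1.
have e : (1 + c) * (gam + 1) * (a + (gam + 1)) = (a + 1) * (vv a 1 + vv a 4) by rewrite /vv; fld.
move: e; rewrite h0 h1 addxxF mulr0 => /eqP; rewrite !mulf_eq0 (negbTE h1c) (negbTE hg1) /=.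
by rewrite (negbTE hag1).
Qed.

Lemma bad25 b : vv a 2 = b -> vv a 5 = b -> False.
Proof.
move=> h0 h1.
have e : (1 + c) = (a + gam) * (vv a 2 + vv a 5) by rewrite /vv; fld.
by move: e; rewrite h0 h1 addxxF mulr0 => /eqP; rewrite (negbTE h1c).
Qed.

Lemma tri012 b : vv a 0 = b -> vv a 1 = b -> vv a 2 = b -> False.
Proof.
move=> hi hj hk.
have e : gam*a*(a+1)*(a+gam)*(a+(gam+1)) = (a*(a+1)*(a+gam))^+2 * ((1 + 0) * (vv a 0 + vv a 1) + (1 + (gam+1)) * (vv a 0 + vv a 2)).
  by rewrite /vv; fld.
move: e; rewrite hi hj hk addxxF !mulr0 addr0 mulr0 => /eqP.
rewrite !mulf_eq0 ?expf_eq0 ?(negbTE g0) ?(negbTE hg1) ?(negbTE ha0) ?(negbTE ha1) ?(negbTE hag) ?(negbTE hag1) /=.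
by [].
Qed.

Lemma tri015 b : vv a 0 = b -> vv a 1 = b -> vv a 5 = b -> False.
Proof.
move=> hi hj hk.
have e : gam*a^+3*(a+1)*(a+gam) = (a*(a+1)*(a+gam))^+2 * ((1 + (a+gam)^-1) * (vv a 0 + vv a 1) + (1 + (gam+1)) * (vv a 0 + vv a 5)).
  by rewrite /vv; fld.
move: e; rewrite hi hj hk addxxF !mulr0 addr0 mulr0 => /eqP.
rewrite !mulf_eq0 ?expf_eq0 ?(negbTE g0) ?(negbTE hg1) ?(negbTE ha0) ?(negbTE ha1) ?(negbTE hag) ?(negbTE hag1) /=.
by [].
Qed.

Lemma tri024 b : vv a 0 = b -> vv a 4 = b -> vv a 2 = b -> False.
Proof.
move=> hi hj hk.
have e : a*(a+1)*(a+gam)*(a+(gam+1))*((gam+1)*a^+2+a+(gam+1)) = (a*(a+1)*(a+gam))^+2 * ((1 + 0) * (vv a 0 + vv a 4) + (1 + (a+1)^-1) * (vv a 0 + vv a 2)).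
  by rewrite /vv; fld.
move: e; rewrite hi hj hk addxxF !mulr0 addr0 mulr0 => /eqP.
rewrite !mulf_eq0 ?expf_eq0 ?(negbTE g0) ?(negbTE hg1) ?(negbTE ha0) ?(negbTE ha1) ?(negbTE hag) ?(negbTE hag1) /=.
move=> /eqP hq.
have e1 : a * (a + gam) = 1.
  apply: add_eqF; transitivity (gam * ((gam + 1) * a ^+ 2 + a + (gam + 1))); last by rewrite hq mulr0.
  by c2fold; ring [ggF].
have e2 : gam + c * (a * (a + gam)) = a * (a + gam) * (vv a 0 + vv a 2) by rewrite /vv; fld.
move: e2; rewrite hi hk addxxF mulr0 e1 mulr1 => /add_eqF h.
by move/eqP: cg; rewrite h.
Qed.

Lemma tri045 b : vv a 0 = b -> vv a 4 = b -> vv a 5 = b -> False.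
Proof.
move=> hi hj hk.
have e : (gam+1)*a*(a+1)*(a+gam)^+4 = (a*(a+1)*(a+gam))^+2 * ((1 + (a+gam)^-1) * (vv a 0 + vv a 4) + (1 + (a+1)^-1) * (vv a 0 + vv a 5)).
  by rewrite /vv; fld.
move: e; rewrite hi hj hk addxxF !mulr0 addr0 mulr0 => /eqP.
rewrite !mulf_eq0 ?expf_eq0 ?(negbTE g0) ?(negbTE hg1) ?(negbTE ha0) ?(negbTE ha1) ?(negbTE hag) ?(negbTE hag1) /=.
by [].
Qed.

Lemma tri123 b : vv a 3 = b -> vv a 1 = b -> vv a 2 = b -> False.
Proof.
move=> hi hj hk.
have e : (gam+1)*a*(a+1)*(a+gam)^+4 = (a*(a+1)*(a+gam))^+2 * ((a^-1 + 0) * (vv a 3 + vv a 1) + (a^-1 + (gam+1)) * (vv a 3 + vv a 2)).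
  by rewrite /vv; fld.
move: e; rewrite hi hj hk addxxF !mulr0 addr0 mulr0 => /eqP.
rewrite !mulf_eq0 ?expf_eq0 ?(negbTE g0) ?(negbTE hg1) ?(negbTE ha0) ?(negbTE ha1) ?(negbTE hag) ?(negbTE hag1) /=.
by [].
Qed.

Lemma tri135 b : vv a 3 = b -> vv a 1 = b -> vv a 5 = b -> False.
Proof.
move=> hi hj hk.
have e : a*(a+1)*(a+gam)*(a+(gam+1))*((gam+1)*a^+2+a+(gam+1)) = (a*(a+1)*(a+gam))^+2 * ((a^-1 + (a+gam)^-1) * (vv a 3 + vv a 1) + (a^-1 + (gam+1)) * (vv a 3 + vv a 5)).
  by rewrite /vv; fld.
move: e; rewrite hi hj hk addxxF !mulr0 addr0 mulr0 => /eqP.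
rewrite !mulf_eq0 ?expf_eq0 ?(negbTE g0) ?(negbTE hg1) ?(negbTE ha0) ?(negbTE ha1) ?(negbTE hag) ?(negbTE hag1) /=.
move=> /eqP hq.
have e1 : a * (a + gam) = 1.
  apply: add_eqF; transitivity (gam * ((gam + 1) * a ^+ 2 + a + (gam + 1))); last by rewrite hq mulr0.
  by c2fold; ring [ggF].
have e2 : a * (a + gam) + c * gam = a * (a + gam) * (vv a 3 + vv a 5) by rewrite /vv; fld.
move: e2; rewrite hi hk addxxF mulr0 e1 => /add_eqF h.
move/eqP: cg1; apply; rewrite -ginv -[c]mulr1 -(mulfV g0) mulrA -h mul1r //.
Qed.

Lemma tri234 b : vv a 3 = b -> vv a 4 = b -> vv a 2 = b -> False.
Proof.
move=> hi hj hk.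
have e : gam*a^+3*(a+1)*(a+gam) = (a*(a+1)*(a+gam))^+2 * ((a^-1 + 0) * (vv a 3 + vv a 4) + (a^-1 + (a+1)^-1) * (vv a 3 + vv a 2)).
  by rewrite /vv; fld.
move: e; rewrite hi hj hk addxxF !mulr0 addr0 mulr0 => /eqP.
rewrite !mulf_eq0 ?expf_eq0 ?(negbTE g0) ?(negbTE hg1) ?(negbTE ha0) ?(negbTE ha1) ?(negbTE hag) ?(negbTE hag1) /=.
by [].
Qed.

Lemma tri345 b : vv a 3 = b -> vv a 4 = b -> vv a 5 = b -> False.
Proof.
move=> hi hj hk.
have e : gam*a*(a+1)*(a+gam)*(a+(gam+1)) = (a*(a+1)*(a+gam))^+2 * ((a^-1 + (a+gam)^-1) * (vv a 3 + vv a 4) + (a^-1 + (a+1)^-1) * (vv a 3 + vv a 5)).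
  by rewrite /vv; fld.
move: e; rewrite hi hj hk addxxF !mulr0 addr0 mulr0 => /eqP.
rewrite !mulf_eq0 ?expf_eq0 ?(negbTE g0) ?(negbTE hg1) ?(negbTE ha0) ?(negbTE ha1) ?(negbTE hag) ?(negbTE hag1) /=.
by [].
Qed.

Lemma Dpp i : (i < 6)%N -> D a (pp a i) = vv a i.
Proof.
have ha10 : a + 1 != 1 by rewrite shiftF addxxF.
have ha1g : a + 1 != gam by rewrite shiftF.
have hag1x : a + gam != 1 by rewrite shiftF addrC.
have hagg : a + gam != gam by rewrite shiftF addxxF.
rewrite /D /vv /pp.
case: i => [|[|[|[|[|[|i]]]]]] // _.
- by rewrite add0r f0 mulr1 fgen.
- by rewrite f1 [1 + a]addrC fgen.
- by rewrite fg mulr0 addr0 [gam + a]addrC fgen.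
- by rewrite addxxF f0 fgen.
- by rewrite addrAC addxxF add0r f1 fgen.
- by rewrite addrAC addxxF add0r fg add0r fgen.
Qed.

Ltac disp3 b := first [ by apply: (bad03 b) | by apply: (bad14 b) | by apply: (bad25 b)
  | by apply: (tri012 b) | by apply: (tri015 b) | by apply: (tri024 b) | by apply: (tri045 b)
  | by apply: (tri123 b) | by apply: (tri135 b) | by apply: (tri234 b) | by apply: (tri345 b) ].

Lemma H2 b x y z : x \in E a -> y \in E a -> z \in E a -> D a x = b -> D a y = b -> D a z = b ->
  x != y -> x != z -> y != z -> False.
Proof.
move=> /E_pp [i hi ->] /E_pp [j hj ->] /E_pp [k hk ->].
rewrite (Dpp _ hi) (Dpp _ hj) (Dpp _ hk) => Hi Hj Hk.
move: i j k hi hj hk Hi Hj Hk => [|[|[|[|[|[|i]]]]]] [|[|[|[|[|[|j]]]]]] [|[|[|[|[|[|k]]]]]] //= _ _ _;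
  rewrite ?eqxx // => Hi Hj Hk _ _ _; disp3 b.
Qed.

Ltac disp2 b tr := case: tr => [t1 [t2 [t3 [t4 [t5 [t6 [t7 t8]]]]]]];
  first [ by apply: (bad03 b) | by apply: (bad14 b) | by apply: (bad25 b)
  | by apply: (pair01 b) | by apply: (pair02 b) | by apply: (pair04 b) | by apply: (pair05 b)
  | by apply: (pair12 b) | by apply: (pair13 b) | by apply: (pair15 b) | by apply: (pair23 b)
  | by apply: (pair24 b) | by apply: (pair34 b) | by apply: (pair35 b) | by apply: (pair45 b)].

Lemma H1 b x y : TR -> x \in E a -> y \in E a -> D a x = b -> D a y = b -> x = y.
Proof.
move=> tr /E_pp [i hi ->] /E_pp [j hj ->].
rewrite (Dpp _ hi) (Dpp _ hj) => Hi Hj.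
move: i j hi hj Hi Hj => [|[|[|[|[|[|i]]]]]] [|[|[|[|[|[|j]]]]]] //= _ _ Hi Hj; exfalso;
  disp2 b tr.
Qed.

End A.
Lemma sg1 : 1 + gam = gam + 1. Proof. exact: addrC. Qed.
Lemma sg2 : gam + 1 + gam = 1. Proof. by rewrite addrAC addxxF add0r. Qed.
Lemma sg3 : gam + (gam + 1) = 1. Proof. by rewrite addrA addxxF add0r. Qed.
Lemma sg4 : 1 + (gam + 1) = gam. Proof. by rewrite addrCA addxxF addr0. Qed.
Lemma sg5 : (1 : F) + 1 = 0. Proof. exact: addxxF. Qed.

Ltac ssimp := rewrite ?add0r ?addr0 ?addxxF ?addKF ?sg1 ?sg2 ?sg3 ?sg4 ?sg5.

Lemma EF4 a x : a \in [:: 1; gam; gam + 1] -> x \in E a -> x \in [:: 0; 1; gam; gam + 1].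
Proof.
move=> ha /E_pp [i hi ->]; move: ha; rewrite !inE => /or3P [] /eqP ->;
  case: i hi => [|[|[|[|[|[|i]]]]]] //= _; ssimp; rewrite ?eqxx ?orbT //.
Qed.

Lemma h1c' : 1 + c != 0. Proof. by rewrite -eqaddF eq_sym c1. Qed.

Ltac f4contra h := match type of h with ?X = ?Y =>
  let e0 := fresh "e0" in let e1 := fresh "e1" in
  assert (e0 : X + Y = 0) by (rewrite h; exact: addxxF);
  first [ assert (e1 : X + Y = (1 + c)) by (c2fold; ring [ggF])
        | assert (e1 : X + Y = gam * (1 + c)) by (c2fold; ring [ggF])
        | assert (e1 : X + Y = (gam + 1) * (1 + c)) by (c2fold; ring [ggF]) ];
  move: e0; rewrite e1 => /eqP; rewrite ?mulf_eq0 (negbTE h1c') ?(negbTE g0) ?(negbTE g1n0) end.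

Lemma F4case a b x y : a \in [:: 1; gam; gam + 1] -> x \in E a -> y \in E a ->
  D a x = b -> D a y = b -> x = y.
Proof.
move=> ha hx hy; have := EF4 _ _ ha hx; have := EF4 _ _ ha hy.
move: ha; rewrite !inE => /or3P [] /eqP -> /or4P [] /eqP -> /or4P [] /eqP -> //;
  rewrite /D; ssimp; rewrite ?f0 ?f1 ?fg ?fg1 => Hx Hy; exfalso;
  have h := Hx; rewrite -Hy in h; f4contra h; by [].
Qed.

Lemma gen_quad a b x : x \notin E a -> D a x = b ->
  b * (x * x) + (a * b + 1 + c) * x + a * c = 0.
Proof.
rewrite /E !inE !negb_or => /and5P [hx0 hx1 hxg hxa /andP [hxa1 hxag]].
have hx0' : x + a != 0 by rewrite -eqaddF.
have hx1' : x + a != 1 by rewrite shiftF addrC.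
have hxg' : x + a != gam by rewrite shiftF addrC.
rewrite /D (fgen _ hx0 hx1 hxg) (fgen _ hx0' hx1' hxg') => h.
have e : b * (x * x) + (a * b + 1 + c) * x + a * c = x * (x + a) * (((x + a)^-1 + c * x^-1) + b).
  by fld.
by rewrite e h addxxF mulr0.
Qed.

Lemma no3 a b x y z : a != 0 ->
  b * (x * x) + (a * b + 1 + c) * x + a * c = 0 ->
  b * (y * y) + (a * b + 1 + c) * y + a * c = 0 ->
  b * (z * z) + (a * b + 1 + c) * z + a * c = 0 ->
  x != y -> x != z -> y != z -> False.
Proof.
move=> ha hx hy hz xy xz yz.
set B := a * b + 1 + c in hx hy hz.
have e1 : (x + y) * (b * (x + y) + B) = 0.
  transitivity ((b * (x * x) + B * x + a * c) + (b * (y * y) + B * y + a * c)).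
    by c2fold; ring.
  by rewrite hx hy addr0.
have e2 : (x + z) * (b * (x + z) + B) = 0.
  transitivity ((b * (x * x) + B * x + a * c) + (b * (z * z) + B * z + a * c)).
    by c2fold; ring.
  by rewrite hx hz addr0.
move/eqP: e1; rewrite mulf_eq0 -eqaddF (negbTE xy) /= => /eqP e1.
move/eqP: e2; rewrite mulf_eq0 -eqaddF (negbTE xz) /= => /eqP e2.
have e3 : b * (y + z) = 0.
  transitivity ((b * (x + y) + B) + (b * (x + z) + B)); first by c2fold; ring.
  by rewrite e1 e2 addr0.
move/eqP: e3; rewrite mulf_eq0 -eqaddF (negbTE yz) orbF => /eqP hb0.
rewrite hb0 mul0r add0r in e1.
move: hx; rewrite hb0 e1 !mul0r !add0r => /eqP; rewrite mulf_eq0 (negbTE ha) /=.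
by rewrite (negbTE c0).
Qed.

Lemma cyc_inj : injective (cycle3 gam).
Proof.
pose ci (y : F) := if y == 1 then 0 else if y == gam then 1 else if y == 0 then gam else y.
apply: (can_inj (g := ci)) => x; rewrite /cycle3.
have h01 : ((0 : F) == 1) = false by rewrite eq_sym oner_eq0.
have h0g : ((0 : F) == gam) = false by rewrite eq_sym (negbTE g0).
have hg1 : (gam == 1) = false by rewrite (negbTE g1).
case: (eqVneq x 0) => [->|x0]; first by rewrite /ci eqxx.
case: (eqVneq x 1) => [->|x1]; first by rewrite /ci hg1 eqxx.
case: (eqVneq x gam) => [->|xg]; first by rewrite /ci h01 h0g eqxx.
by rewrite /ci (negbTE x1) (negbTE xg) (negbTE x0).
Qed.

Lemma f_inj : injective f.
Proof.
move=> x y; rewrite /f /InvCyc !InvE => /invr_inj; exact: cyc_inj.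
Qed.


Lemma upper a b : (cDeltaAB f c a b <= 4)%N /\ (TR -> (cDeltaAB f c a b <= 3)%N).
Proof.
rewrite /cDeltaAB.
case: (eqVneq a 0) => [->|ha].
  set A := [set x | f (x + 0) + c * f x == b].
  have h : (#|A| <= 1)%N.
    apply: card_le1 => x y; rewrite !inE !addr0 => /eqP hx /eqP hy.
    apply: f_inj; apply: (mulfI h1c').
    by rewrite !mulrDl !mul1r hx hy.
  by split => [|_]; apply: leq_trans h _.
set A := [set x | f (x + a) + c * f x == b].
set B := [set x | x \in E a].
rewrite -(cardsID B A).
have hG : (#|A :\: B| <= 2)%N.
  apply: card_le2 => x y z; rewrite !(in_setD, in_setI, in_set).
  move=> /andP [hxE /eqP Hx] /andP [hyE /eqP Hy] /andP [hzE /eqP Hz].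
  exact: (no3 _ _ _ _ _ ha (gen_quad _ _ _ hxE Hx) (gen_quad _ _ _ hyE Hy) (gen_quad _ _ _ hzE Hz)).
have hH : (#|A :&: B| <= 2)%N /\ (TR -> (#|A :&: B| <= 1)%N).
  case: (boolP (a \in [:: 1; gam; gam + 1])) => haF.
    have h : (#|A :&: B| <= 1)%N.
      apply: card_le1 => x y; rewrite !(in_setD, in_setI, in_set).
      move=> /andP [/eqP Hx hxE] /andP [/eqP Hy hyE].
      exact: (F4case _ _ _ _ haF hxE hyE Hx Hy).
    by split => [|_]; apply: leq_trans h _.
  have hA : notF4 a.
    by move: haF; rewrite /notF4 !inE !negb_or ha => /and3P [-> -> ->].
  split.
    apply: card_le2 => x y z; rewrite !(in_setD, in_setI, in_set).
    move=> /andP [/eqP Hx hxE] /andP [/eqP Hy hyE] /andP [/eqP Hz hzE].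
    exact: (H2 _ hA _ _ _ _ hxE hyE hzE Hx Hy Hz).
  move=> tr; apply: card_le1 => x y; rewrite !(in_setD, in_setI, in_set).
  move=> /andP [/eqP Hx hxE] /andP [/eqP Hy hyE].
  exact: (H1 _ hA _ _ _ tr hxE hyE Hx Hy).
case: hH => h1 h2; split.
  by apply: (leq_trans (leq_add h1 hG)).
by move=> tr; apply: (leq_trans (leq_add (h2 tr) hG)).
Qed.

Ltac nzt := repeat (apply: mulf_neq0 || apply: invr_neq0 || apply: expf_neq0); try assumption.

Lemma neq_by (X Y K R : F) : (X + Y) * K = R -> R != 0 -> X != Y.
Proof. by move=> e hR; apply: contra hR => /eqP xy; rewrite -e xy addxxF mul0r. Qed.

Lemma lower : (3 <= cDeltaAB f c (gam * (1 + c))%R ((1 + c * gam) / (1 + c))%R)%N.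
Proof.
have hc0 := c0. have hg1 := g1n0. have h1c := h1c'.
have hcg : c + gam != 0 by rewrite -eqaddF cg.
have hcg1 : c + (gam + 1) != 0 by rewrite -eqaddF cg1.
have h1cg : 1 + c * gam != 0.
  rewrite addrC -eqaddF; apply: contra cg1 => /eqP h.
  have -> : c = c * gam * gam^-1 by rewrite -mulrA mulfV ?mulr1.
  by rewrite h mul1r ginv.
have hcg2 : c * (gam + 1) + 1 != 0.
  rewrite -eqaddF; apply: contra cg => /eqP h.
  have -> : c = c * (gam + 1) * (gam + 1)^-1 by rewrite -mulrA mulfV ?mulr1 // g1n0.
  by rewrite h mul1r ginv1.
have hcg3 : c + gam * gam != 0 by rewrite gg.
rewrite /cDeltaAB.
set a := gam * (1 + c).
set b := (1 + c * gam) / (1 + c).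
have ha0 : a != 0 by rewrite mulf_neq0.
have ha1 : a != 1 by apply: (@neq_by _ _ 1 (gam * (c + gam))); [rewrite /a; fld | rewrite mulf_neq0].
have hag : a != gam by apply: (@neq_by _ _ 1 (gam * c)); [rewrite /a; fld | rewrite mulf_neq0].
have Da : a \in [set x | f (x + a) + c * f x == b].
  rewrite inE addxxF f0 fgen //; apply/eqP; rewrite /a /b; fld.
set x1 := (gam + 1) * (1 + c).
have e1 : x1 + a = 1 + c by rewrite /x1 /a; c2fold; ring [ggF].
have Dx1 : x1 \in [set x | f (x + a) + c * f x == b].
  have h0 : x1 != 0 by rewrite mulf_neq0.
  have h1 : x1 != 1 by apply: (@neq_by _ _ 1 ((gam + 1) * (c + (gam + 1)))); [rewrite /x1; fld | rewrite mulf_neq0].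
  have hg : x1 != gam by apply: (@neq_by _ _ 1 ((gam + 1) * (c + gam))); [rewrite /x1; fld | rewrite mulf_neq0].
  have h1' : 1 + c != 1 by apply: (@neq_by _ _ 1 c); [fld | done].
  have hg' : 1 + c != gam by apply: (@neq_by _ _ 1 (c + (gam + 1))); [fld | done].
  rewrite inE e1 (fgen _ h0 h1 hg) (fgen _ h1c h1' hg'); apply/eqP; rewrite /x1 /b; fld.
have hax1 : a != x1 by apply: (@neq_by _ _ 1 (1 + c)); [rewrite /a /x1; fld | done].
set x2 := (gam + 1) * c * (1 + c) / (1 + c * gam).
case: (eqVneq x2 1) => hx2.
  set a1 := a + 1.
  have e2 : a1 + a = 1 by rewrite /a1 addrAC addxxF add0r.
  have h0 : a1 != 0 by rewrite /a1 -eqaddF.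
  have h1 : a1 != 1 by apply: (@neq_by _ _ 1 a); [rewrite /a1; fld | done].
  have hg : a1 != gam by apply: (@neq_by _ _ 1 (1 + c * gam)); [rewrite /a1 /a; fld | done].
  have Da1 : a1 \in [set x | f (x + a) + c * f x == b].
    rewrite inE e2 f1 (fgen _ h0 h1 hg); apply/eqP; apply: add_eqF.
    have e : gam + 1 + c * a1^-1 + b =
      (1 + c * gam) / (gam * (c + gam) * (1 + c)) * (x2 + 1).
      by rewrite /a1 /a /b /x2; fld.
    by rewrite e hx2 addxxF mulr0.
  apply: (@card_ge3 _ _ _ _ _ Da Dx1 Da1) => //.
    by apply: (@neq_by _ _ 1 1); [rewrite /a1; fld | rewrite oner_eq0].
  by apply: (@neq_by _ _ 1 c); [rewrite /a1 /a /x1; fld | done].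
set s := gam * (1 + c) / (1 + c * gam).
have e2 : x2 + a = s by rewrite /x2 /a /s; fld.
have hs0 : s != 0 by rewrite /s; nzt.
have Dx2 : x2 \in [set x | f (x + a) + c * f x == b].
  have h0 : x2 != 0 by rewrite /x2; nzt.
  have hg : x2 != gam.
    by apply: (@neq_by _ _ (1 + c * gam) ((gam + 1) * (c + gam) ^+ 2)); [rewrite /x2; fld | nzt].
  have h1' : s != 1 by apply: (@neq_by _ _ (1 + c * gam) (gam + 1)); [rewrite /s; fld | done].
  have hg' : s != gam by apply: (@neq_by _ _ (1 + c * gam) c); [rewrite /s; fld | done].
  rewrite inE e2 (fgen _ h0 hx2 hg) (fgen _ hs0 h1' hg'); apply/eqP; rewrite /s /x2 /b; fld.
apply: (@card_ge3 _ _ _ _ _ Da Dx1 Dx2) => //.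
  by apply: (@neq_by _ _ 1 s); [rewrite addrC e2; fld | done].
apply: (@neq_by _ _ (1 + c * gam) ((gam + 1) * (1 + c) * (c * (gam + 1) + 1))).
  by rewrite /x1 /x2; fld.
by nzt.
Qed.

End Main.

Theorem mainTheorem11 (F : finFieldType) (n : nat) (gam c : F) :
  #|F| = (2 ^ n)%N -> (4 <= n)%N -> ~~ odd n ->
  gam ^+ 4 = gam -> gam != 0 -> gam != 1 ->
  c ^+ 4 != c ->
  let f := InvCyc n gam in
  let tr := abs_tr n in
  ((3 <= cDelta f c)%N /\ (cDelta f c <= 4)%N) /\
  (tr (c * gam) = 1 -> tr (c * gam ^+ 2) = 1 ->
   tr (c^-1 * gam) = 1 -> tr (c^-1 * gam ^+ 2) = 1 ->
   tr (c / (c + gam) ^+ 2) = 1 -> tr (c * gam ^+ 2 / (c + gam) ^+ 2) = 1 ->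
   tr (c * gam / (c + gam ^+ 2) ^+ 2) = 1 -> tr (c / (c + gam ^+ 2) ^+ 2) = 1 ->
   cDelta f c = 3%N).
Proof.
move=> HF n4 _ g4 g0 g1 c4 f tr.
have hc1 := c1 _ _ c4.
have lo : (3 <= cDelta f c)%N.
  apply: leq_trans (lower _ _ _ _ HF n4 g4 g0 g1 c4) _.
  rewrite /cDelta.
  by apply: (leq_bigmax_cond (gam * (1 + c), (1 + c * gam) / (1 + c))%R (F := fun ab => cDeltaAB f c ab.1 ab.2)); rewrite hc1.
have up4 : (cDelta f c <= 4)%N.
  by apply/bigmax_leqP => ab _; case: (upper _ _ _ _ HF n4 g4 g0 g1 c4 ab.1 ab.2).
split; first by [].
move=> t1 t2 t3 t4 t5 t6 t7 t8.
have tr8 : TR _ n gam c by [].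
have up3 : (cDelta f c <= 3)%N.
  by apply/bigmax_leqP => ab _; case: (upper _ _ _ _ HF n4 g4 g0 g1 c4 ab.1 ab.2) => _; apply.
by apply/eqP; rewrite eqn_leq up3 lo.
Qed.
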